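(* Let $S$ and $T$ be valid configurations of $n\ge 2$ points each whose smallest enclosing discs have a common center, placed at the origin. Let $\delta$ be a direction forming an angle of at least $\pi/(24n)$ with every direction in $\Delta_S\cup\Delta_T$, and rotate coordinates so that $\delta$ is the positive $x$-direction. Let $s_1,\dots,s_n=\Pi_\delta(S)$ and $t_1,\dots,t_n=\Pi_\delta(T)$, and let $M_\delta(s_i)=t_i$. Then the translation $\vec v=\bigl((r(S)+r(T)+2)(1+8n),\,0\bigr)$ is valid with respect to $M_\delta$, and moreover the ordering $s_1,\dots,s_n$ yields a valid itinerary from $S$ to $T+\vec v$ with respect to $M_\delta$.
   Context: For $p\in\mathbb R^2$, $D(p)$ is the open unit disc centered at $p$. A configuration is a finite set of points in $\mathbb R^2$; it is valid if any two distinct points are at distance at least $2$. $r(P)$ is the radius of the smallest closed disc containing the point set $P$. Two distinct points $p,q\in S$ are Delaunay neighbors if there is a closed disc whose boundary passes through $p$ and $q$ and whose interior contains no point of $S$. $\Delta_S$ is the set of directions consisting of, for every pair of Delaunay neighbors $s,s'\in S$, the directions of the two common inner tangent lines of $D(s)$ and $D(s')$, each taken with both orientations; $\Delta_T$ is defined analogously. $\Pi_\delta(C)$ orders $C$ by decreasing $x$-coordinate, ties broken by decreasing $y$-coordinate. Given a bijection $M:S\to T$ and translation $\vec v$, an ordering $s_1,\dots,s_n$ of $S$ yields a valid itinerary if for each $i$, $\mathrm{conv}(D(s_i)\cup D(M(s_i)+\vec v))$ is disjoint from $D(s_j)$ for $j>i$ and from $D(M(s_j)+\vec v)$ for $j<i$;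 $\vec v$ is valid w.r.t. $M$ if some ordering yields a valid itinerary. *)

(* Defs.v *)
From Stdlib Require Import Reals Lra List Permutation.
Open Scope R_scope.

Definition point := (R * R)%type.

Definition padd (p q : point) : point := (fst p + fst q, snd p + snd q).
Definition psub (p q : point) : point := (fst p - fst q, snd p - snd q).
Definition pscale (a : R) (p : point) : point := (a * fst p, a * snd p).
Definition dot (p q : point) : R := fst p * fst q + snd p * snd q.
Definition cross (p q : point) : R := fst p * snd q - snd p * fst q.
Definition dist (p q : point) : R := sqrt (dot (psub p q) (psub p q)).

(* a direction is a unit vector *)
Definition unit_vec (u : point) : Prop := dot u u = 1.

Definition angle (u w : point) : R := acos (dot u w).

Definition D (p : point) : point -> Prop := fun x => dist x p < 1.

Definition convex (C : point -> Prop) : Prop :=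
  forall x y (l : R), C x -> C y -> 0 <= l <= 1 ->
    C (padd (pscale (1 - l) x) (pscale l y)).

Definition conv (A : point -> Prop) : point -> Prop :=
  fun x => forall C, convex C -> (forall y, A y -> C y) -> C x.

Definition union (A B : point -> Prop) : point -> Prop := fun x => A x \/ B x.
Definition disjoint (A B : point -> Prop) : Prop := forall x, ~ (A x /\ B x).

(* A configuration is a finite list of points; it is valid if any two distinct
   entries are at distance at least 2 (in particular the entries are distinct). *)
Definition valid_config (P : list point) : Prop :=
  forall i j, (i < length P)%nat -> (j < length P)%nat -> i <> j ->
    dist (nth i P (0,0)) (nth j P (0,0)) >= 2.

Definition smallest_enclosing_disc (P : list point) (c : point) (r : R) : Prop :=
  (forall p, In p P -> dist p c <= r) /\
  (forall c' r', (forall p, In p P -> dist p c' <= r') -> r <= r').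

Definition delaunay_neighbors (S : list point) (p q : point) : Prop :=
  In p S /\ In q S /\ p <> q /\
  exists (c : point) (rho : R),
    dist p c = rho /\ dist q c = rho /\ (forall s, In s S -> ~ dist s c < rho).

(* u (a unit vector) is the direction, with some orientation, of a common inner
   tangent line of D(p) and D(q): the line {a + l u} is at distance exactly 1
   from p and from q and separates p from q. *)
Definition inner_tangent_dir (p q u : point) : Prop :=
  unit_vec u /\ exists a : point,
    Rabs (cross u (psub p a)) = 1 /\ Rabs (cross u (psub q a)) = 1 /\
    cross u (psub p a) * cross u (psub q a) < 0.

Definition DeltaDirs (S : list point) (u : point) : Prop :=
  exists p q, delaunay_neighbors S p q /\ inner_tangent_dir p q u.

(* coordinates in the rotated frame where delta is the positive x-direction *)
Definition perp (d : point) : point := (- snd d, fst d).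
Definition xcoord (d p : point) : R := dot p d.
Definition ycoord (d p : point) : R := dot p (perp d).

Definition pi_before (d p q : point) : Prop :=
  xcoord d p > xcoord d q \/ (xcoord d p = xcoord d q /\ ycoord d p > ycoord d q).

(* s is Pi_delta(S): a reordering of S sorted by Pi_delta *)
Definition is_Pi (d : point) (S s : list point) : Prop :=
  Permutation.Permutation S s /\
  forall i j, (i < j)%nat -> (j < length s)%nat ->
    pi_before d (nth i s (0,0)) (nth j s (0,0)).

(* An ordering of S together with the matching, given as the list of pairs
   (s_i, M(s_i)); it yields a valid itinerary for translation v. *)
Definition valid_itinerary (l : list (point * point)) (v : point) : Prop :=
  forall i, (i < length l)%nat ->
    let si := fst (nth i l ((0,0),(0,0))) in
    let ti := snd (nth i l ((0,0),(0,0))) in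
    let H := conv (union (D si) (D (padd ti v))) in
    (forall j, (i < j)%nat -> (j < length l)%nat ->
       disjoint H (D (fst (nth j l ((0,0),(0,0)))))) /\
    (forall j, (j < i)%nat ->
       disjoint H (D (padd (snd (nth j l ((0,0),(0,0)))) v))).

(* The matching M is given as the list of pairs (s, M s) (one per point of S);
   v is valid w.r.t. M if some ordering of S yields a valid itinerary. *)
Definition valid_translation (M : list (point * point)) (v : point) : Prop :=
  exists l, Permutation.Permutation M l /\ valid_itinerary l v.

(* Main.v *)
Require Import Defs.
From Stdlib Require Import Reals List.
Open Scope R_scope.
From Stdlib Require Import Lra Psatz Permutation.
Require Import Defs.

Lemma abs_sq x y : x^2 <= y^2 -> 0 <= y -> -y <= x <= y.
Proof. intros. split; destruct (Rle_or_lt (-y) x); try lra; destruct (Rle_or_lt x y); try lra; nra. Qed.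

Lemma sqrt_lt1_iff z : 0 <= z -> (sqrt z < 1 <-> z < 1).
Proof.
intros Hz; split; intros H.
- destruct (Rlt_or_le z 1) as [h|h]; auto.
  assert (sqrt 1 <= sqrt z) by (apply sqrt_le_1_alt; lra). rewrite sqrt_1 in H0. lra.
- rewrite <- sqrt_1. apply sqrt_lt_1_alt; lra.
Qed.

Lemma D_iff p1 p2 x1 x2 : D (p1,p2) (x1,x2) <-> (x1 - p1)^2 + (x2 - p2)^2 < 1.
Proof.
unfold D, Defs.dist, dot, psub; cbn [fst snd].
replace ((x1 - p1) * (x1 - p1) + (x2 - p2) * (x2 - p2))
  with ((x1 - p1)^2 + (x2 - p2)^2) by ring.
apply sqrt_lt1_iff. pose proof (pow2_ge_0 (x1-p1)); pose proof (pow2_ge_0 (x2-p2)); lra.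
Qed.

Definition St (p p' : point) : point -> Prop := fun x =>
  exists l, 0 <= l <= 1 /\
   (fst x - fst p - l*(fst p' - fst p))^2 + (snd x - snd p - l*(snd p' - snd p))^2 < 1.

Lemma conv_ball (A1 A2 B1 B2 l : R) : A1^2 + A2^2 < 1 -> B1^2+B2^2 < 1 -> 0 <= l <= 1 ->
  ((1-l)*A1 + l*B1)^2 + ((1-l)*A2 + l*B2)^2 < 1.
Proof.
intros HA HB Hl.
assert (2*(A1*B1 + A2*B2) <= A1^2+A2^2+B1^2+B2^2) by (pose proof (pow2_ge_0 (A1-B1)); pose proof (pow2_ge_0 (A2-B2)); nra).
assert (((1-l)*A1 + l*B1)^2 + ((1-l)*A2 + l*B2)^2 =
  (1-l)^2*(A1^2+A2^2) + l*(1-l)*(2*(A1*B1+A2*B2)) + l^2*(B1^2+B2^2)) by ring.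
assert (l*(1-l)*(2*(A1*B1+A2*B2)) <= l*(1-l)*(A1^2+A2^2+B1^2+B2^2)).
{ apply Rmult_le_compat_l; nra. }
replace (A1^2+A2^2+B1^2+B2^2) with ((A1^2+A2^2)+(B1^2+B2^2)) in * by ring.
remember (A1^2+A2^2) as X. remember (B1^2+B2^2) as Y.
assert ((1 - l)^2*X + l*(1-l)*(X+Y) + l^2*Y = (1-l)*X + l*Y) by ring.
destruct (Rle_or_lt Y X).
- assert (l*(X-Y) >= 0) by (apply Rle_ge, Rmult_le_pos; lra). lra.
- assert ((1-l)*(Y-X) >= 0) by (apply Rle_ge, Rmult_le_pos; lra). lra.
Qed.

Lemma St_convex p p' : convex (St p p').
Proof.
intros x y l [lx [Hlx Hx]] [ly [Hly Hy]] Hl.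
exists ((1-l)*lx + l*ly). split; [nra|].
destruct p as [p1 p2], p' as [q1 q2], x as [x1 x2], y as [y1 y2].
unfold padd, pscale in *; cbn [fst snd] in *.
pose proof (conv_ball _ _ _ _ l Hx Hy Hl) as H.
match goal with |- ?L < 1 => replace L with
  (((1 - l) * (x1 - p1 - lx * (q1 - p1)) + l * (y1 - p1 - ly * (q1 - p1))) ^ 2 +
       ((1 - l) * (x2 - p2 - lx * (q2 - p2)) + l * (y2 - p2 - ly * (q2 - p2))) ^ 2) by ring end.
exact H.
Qed.

Lemma disj_seg p1 p2 r1 r2 q1 q2 :
  (forall l, 0 <= l <= 1 -> 4 <= (q1 - p1 - l*(r1 - p1))^2 + (q2 - p2 - l*(r2 - p2))^2) ->
  disjoint (conv (union (D (p1,p2)) (D (r1,r2)))) (D (q1,q2)).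
Proof.
intros Hfar [x1 x2] [Hc Hq].
assert (HS : St (p1,p2) (r1,r2) (x1,x2)).
{ apply Hc. apply St_convex. intros [y1 y2] [Hy|Hy]; apply D_iff in Hy;
  unfold St; cbn [fst snd].
  - exists 0. split; [lra|]. nra.
  - exists 1. split; [lra|]. nra. }
destruct HS as [l [Hl Hx]]. apply D_iff in Hq. cbn [fst snd] in Hx.
specialize (Hfar l Hl).
set (a1 := x1 - p1 - l * (r1 - p1)) in *.
set (a2 := x2 - p2 - l * (r2 - p2)) in *.
set (b1 := x1 - q1) in *. set (b2 := x2 - q2) in *.
replace (q1 - p1 - l * (r1 - p1)) with (a1 - b1) in Hfar by (unfold a1, b1; ring).
replace (q2 - p2 - l * (r2 - p2)) with (a2 - b2) in Hfar by (unfold a2, b2; ring).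
clearbody a1 a2 b1 b2.
pose proof (pow2_ge_0 (a1+b1)); pose proof (pow2_ge_0 (a2+b2)). nra.
Qed.

Lemma sq_lt_pos P Q : 0 <= P -> 0 < Q -> P^2 < Q^2 -> P < Q.
Proof. intros. destruct (Rlt_or_le P Q); auto. nra. Qed.

Lemma sc1 a B Z W s c :
  0 <= a -> 0 < B -> 0 <= Z -> 0 < W -> a*W < B*Z ->
  (a*Z + B*W)^2 < 4*(W^2+Z^2) -> 4 <= a^2+B^2 -> Z <= s*W -> 0 <= s -> s^2 <= 1/4 ->
  c^2 < 1 - s^2 ->
  a^2+B^2 <= 8 /\ exists al be, al^2+be^2 = 1 /\ al*B + be*a = 2 /\ c < al.
Proof.
intros Ha HB HZ HW HaW Hcol HF HZs Hs Hs2 Hc.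
assert (HZ2 : Z^2 <= s^2*W^2) by nra.
assert (HBW : (B*W)^2 <= (a*Z+B*W)^2) by (assert (0 <= a*Z) by nra; assert (0 <= B*W) by nra; nra).
assert (HB2 : B^2 < 4*(1+s^2)).
{ assert (B^2*W^2 < 4*(1+s^2)*W^2) by nra.
  assert (0 < W^2) by nra.
  apply (Rmult_lt_reg_r (W^2)); lra. }
assert (HaB : a < s*B).
{ assert (a*W < s*B*W) by nra. apply (Rmult_lt_reg_r W); lra. }
assert (Ha2 : a^2 <= s^2*B^2) by (assert (0 <= s*B) by nra; nra).
assert (HF8 : a^2+B^2 <= 8) by nra.
split; [exact HF8|].
remember (a^2+B^2) as F eqn:HFd.
set (h := sqrt (F - 4)).
assert (Hh0 : 0 <= h) by apply sqrt_pos.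
assert (Hh2 : h^2 = F - 4) by (unfold h; rewrite pow2_sqrt; lra).
clearbody h.
assert (Hid : 4*(B*Z - a*W)^2 - h^2*(B*W+a*Z)^2 = F*(4*(W^2+Z^2) - (B*W+a*Z)^2)).
{ rewrite Hh2, HFd. ring. }
assert (HPQ : h*(B*W+a*Z) < 2*(B*Z - a*W)).
{ apply sq_lt_pos.
  - apply Rmult_le_pos; [lra|]. assert (0 <= a*Z) by nra. nra.
  - lra.
  - assert (0 < F*(4*(W^2+Z^2) - (B*W+a*Z)^2)) by (apply Rmult_lt_0_compat; nra).
    replace ((h * (B * W + a * Z))^2) with (h^2*(B*W+a*Z)^2) by ring.
    replace ((2 * (B * Z - a * W))^2) with (4*(B*Z-a*W)^2) by ring. lra. }
set (X := 2*B + h*a). set (Y := h*B - 2*a).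
assert (HX : 0 < X) by (unfold X; assert (0 <= h*a) by nra; lra).
assert (HhaZ : 0 <= h*a*Z) by (apply Rmult_le_pos; nra).
assert (HhBW : 0 <= h*B*W) by (apply Rmult_le_pos; nra).
assert (HaW0 : 0 <= a*W) by nra.
assert (HY1 : Y*W <= Z*X) by (unfold X, Y; nra).
assert (HY2 : - (Z*X) <= Y*W) by (unfold X, Y; nra).
assert (HYW : (Y*W)^2 <= (Z*X)^2) by nra.
assert (HXY : X^2 + Y^2 = F^2) by (unfold X, Y; rewrite HFd in Hh2 |- *; ring_simplify; rewrite Hh2; ring).
assert (HX2 : F^2 * W^2 <= X^2*(1+s^2)*W^2).
{ assert (X^2*Z^2 <= X^2*(s^2*W^2)) by (apply Rmult_le_compat_l; nra). nra. }
assert (HX3 : F^2 <= X^2*(1+s^2)).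
{ assert (0 < W^2) by nra. apply (Rmult_le_reg_r (W^2)); lra. }
assert (HF0 : 0 < F) by lra.
exists (X/F), (-Y/F). split; [|split].
- field_simplify; [|lra]. rewrite HXY. field. lra.
- unfold X, Y. field_simplify; [|lra]. rewrite HFd. field. lra.
- assert (Hal : 0 < X/F) by (apply Rdiv_lt_0_compat; lra).
  assert (Hal2 : 1 <= (X/F)^2*(1+s^2)).
  { replace ((X/F)^2*(1+s^2)) with (X^2*(1+s^2)/F^2) by (field; lra).
    apply (Rmult_le_reg_r (F^2)); [nra|]. unfold Rdiv. rewrite Rmult_assoc, Rinv_l; nra. }
  assert (Hc2 : c^2 < (X/F)^2) by nra.
  destruct (Rle_or_lt c 0); [lra|]. apply sq_lt_pos; lra.
Qed.


Lemma sc2 a b z W s c l :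
  0 <= a -> 0 < W -> 4 <= a^2+b^2 -> z^2 <= s^2*W^2 -> 0 <= s -> s^2 <= 1/4 ->
  c^2 < 1 - s^2 -> 0 <= l <= 1 -> (a + l*W)^2 + (b - l*z)^2 < 4 ->
  a^2+b^2 <= 8 /\ exists al be, al^2+be^2 = 1 /\ (al*b + be*a)^2 = 4 /\ c < al.
Proof.
intros Ha HW HF Hz Hs Hs2 Hc Hl Hcol.
assert (HE : (a + l*W)^2 + (b - l*z)^2 = (a^2+b^2) + 2*l*(a*W - b*z) + l^2*(W^2+z^2)) by ring.
assert (HD : 0 < b*z - a*W).
{ destruct (Rlt_or_le 0 (b*z - a*W)) as [h|h]; auto.
  assert (0 <= l*(a*W - b*z)) by (apply Rmult_le_pos; lra).
  assert (0 <= l^2*(W^2+z^2)) by (apply Rmult_le_pos; nra). lra. }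
assert (HG : 0 < W^2+z^2) by nra.
assert (HC : (a*z+b*W)^2 < 4*(W^2+z^2)).
{ assert (HGE : (W^2+z^2)*((a + l*W)^2 + (b - l*z)^2) = (l*(W^2+z^2) - (b*z-a*W))^2 + (a*z+b*W)^2) by ring.
  assert ((W^2+z^2)*((a + l*W)^2 + (b - l*z)^2) < (W^2+z^2)*4) by (apply Rmult_lt_compat_l; lra).
  pose proof (pow2_ge_0 (l*(W^2+z^2) - (b*z-a*W))). lra. }
assert (HaW : 0 <= a*W) by nra.
assert (Hzs : - (s*W) <= z <= s*W) by (apply abs_sq; [replace ((s*W)^2) with (s^2*W^2) by ring; lra | nra]).
destruct (Rtotal_order b 0) as [hb|[hb|hb]].
- assert (hz : z < 0) by nra.
  destruct (sc1 a (-b) (-z) W s c) as [H8 [al [be [H1 [H2 H3]]]]]; try nra.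
  replace ((-b)^2) with (b^2) in H8 by ring.
  split; [lra|]. exists al, (-be). split; [replace ((-be)^2) with (be^2) by ring; lra|split; [|lra]].
  replace (al * b + - be * a) with (-(al * - b + be * a)) by ring. rewrite H2. ring.
- subst b. nra.
- assert (hz : 0 < z) by nra.
  destruct (sc1 a b z W s c) as [H8 [al [be [H1 [H2 H3]]]]]; try nra.
  split; [nra|]. exists al, be. split; [nra|split; [|lra]]. rewrite H2. ring.
Qed.

Lemma core e1 e2 f1 f2 w1 w2 l s c :
  e1^2+e2^2 = 1 -> e1*f1 + e2*f2 <= 0 -> 4 <= f1^2+f2^2 -> 0 < e1*w1 + e2*w2 ->
  (-e2*w1 + e1*w2)^2 <= s^2*(e1*w1+e2*w2)^2 -> 0 <= s -> s^2 <= 1/4 -> c^2 < 1 - s^2 ->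
  0 <= l <= 1 -> (f1 - l*w1)^2 + (f2 - l*w2)^2 < 4 ->
  f1^2+f2^2 <= 8 /\ exists u1 u2, u1^2+u2^2 = 1 /\ (u1*f2 - u2*f1)^2 = 4 /\ c < e1*u1 + e2*u2.
Proof.
intros He Hef Hf HW Hz Hs Hs2 Hc Hl Hcol.
assert (E1 : (-(e1*f1+e2*f2))^2 + (-e2*f1 + e1*f2)^2 = (f1^2+f2^2)*(e1^2+e2^2)) by ring.
assert (E2 : (-(e1*f1+e2*f2) + l*(e1*w1+e2*w2))^2 + ((-e2*f1 + e1*f2) - l*(-e2*w1 + e1*w2))^2
   = ((f1 - l*w1)^2 + (f2 - l*w2)^2)*(e1^2+e2^2)) by ring.
rewrite He, Rmult_1_r in E1, E2.
destruct (sc2 (-(e1*f1+e2*f2)) (-e2*f1 + e1*f2) (-e2*w1 + e1*w2) (e1*w1+e2*w2) s c l)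
  as [H8 [al [be [H1 [H2 H3]]]]]; try lra.
split; [lra|].
exists (al*e1 - be*e2), (al*e2 + be*e1). split; [|split].
- replace ((al * e1 - be * e2) ^ 2 + (al * e2 + be * e1) ^ 2) with ((al^2+be^2)*(e1^2+e2^2)) by ring.
  rewrite H1, He; ring.
- rewrite <- H2. ring.
- replace (e1 * (al * e1 - be * e2) + e2 * (al * e2 + be * e1)) with (al*(e1^2+e2^2)) by ring.
  rewrite He. lra.
Qed.

Lemma pi_gt : 3.1 < PI.
Proof.
destruct (Rlt_or_le 3.1 PI) as [h|h]; [exact h|exfalso].
assert (h2 := PI2_3_2).
destruct (COS (PI/2)) as [c _]; try lra.
rewrite cos_PI2 in c. unfold cos_lb, cos_approx in c. simpl in c.
unfold cos_term in c. simpl in c.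
assert (1.5 <= PI/2 <= 1.55) by lra.
set (y := PI/2) in *.
assert (2.25 <= y*y <= 2.4025) by nra.
replace (y * (y * (y * (y * (y * (y * 1)))))) with ((y*y)^3) in c by ring.
replace (y * (y * (y * (y * 1)))) with ((y*y)^2) in c by ring.
replace (y * (y * 1)) with (y*y) in c by ring.
set (z := y*y) in *.
assert (0 < 1 - z/2 + z^2/24 - z^3/720) by nra.
lra.
Qed.

Lemma consts (n : nat) : (2 <= n)%nat ->
  let g := PI / (24 * INR n) in let s := 1 / (8 * INR n) in
  0 <= s /\ s^2 <= 1/4 /\ (cos g)^2 < 1 - s^2 /\ 0 <= g <= PI.
Proof.
intros Hn g s.
assert (HN : 2 <= INR n) by (apply (le_INR 2); auto).
assert (HPI := pi_gt). assert (HP4 := PI_4).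
assert (Hs0 : 0 < s) by (unfold s; apply Rdiv_lt_0_compat; lra).
assert (Hs1 : s <= 1/16) by (unfold s; apply Rmult_le_reg_r with (8*INR n); [lra|]; field_simplify; lra).
assert (Hg0 : 0 < g) by (unfold g; apply Rdiv_lt_0_compat; lra).
assert (Hg1 : g <= 1/12) by (unfold g; apply Rmult_le_reg_r with (24*INR n); [lra|]; field_simplify; lra).
assert (Hsg : s * PI = 3*g) by (unfold s, g; field; lra).
assert (Hsg2 : s < 0.97 * g) by nra.
destruct (SIN g) as [Hsl _]; try lra.
unfold sin_lb, sin_approx in Hsl. simpl in Hsl. unfold sin_term in Hsl. simpl in Hsl.
assert (Hsin : s < sin g).
{ assert (0 < g*g <= 1/144) by nra.
  replace (g * (g * (g * (g * (g * (g * (g * 1))))))) with (g*(g*g)^3) in Hsl by ring.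
  replace (g * (g * (g * (g * (g * 1))))) with (g*(g*g)^2) in Hsl by ring.
  replace (g * (g * (g * 1))) with (g*(g*g)) in Hsl by ring.
  replace (g*1) with g in Hsl by ring.
  set (z := g*g) in *.
  assert (z^3 <= 1/144) by nra. assert (0 <= z^2) by nra.
  assert (0.99*g <= g*(1 - z/6 - z^3/5040)) by nra.
  nra. }
pose proof (sin2_cos2 g) as H2. unfold Rsqr in H2.
split; [lra|split; [nra|split; [nra|split; lra]]].
Qed.

Lemma angle_lt d1 d2 u1 u2 g : d1^2+d2^2 = 1 -> u1^2+u2^2 = 1 -> 0 <= g <= PI ->
  cos g < d1*u1+d2*u2 -> angle (d1,d2) (u1,u2) < g.
Proof.
intros Hd Hu Hg Hc. unfold angle, dot; cbn [fst snd].
set (x := d1*u1+d2*u2) in *.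
assert (Hx : -1 <= x <= 1).
{ assert (x^2 <= 1).
  { unfold x. assert ((d1*u1+d2*u2)^2 + (d1*u2 - d2*u1)^2 = (d1^2+d2^2)*(u1^2+u2^2)) by ring.
    pose proof (pow2_ge_0 (d1*u2 - d2*u1)). nra. }
  split; nra. }
destruct (Rlt_or_le (acos x) g) as [h|h]; auto.
pose proof (acos_bound x).
assert (cos (acos x) <= cos g) by (apply cos_decr_1; lra).
rewrite cos_acos in H0; lra.
Qed.


Lemma sqrt_ge2 z : 0 <= z -> 2 <= sqrt z -> 4 <= z.
Proof.
intros Hz H. destruct (Rlt_or_le z 4) as [h|h]; auto.
assert (sqrt z < sqrt 4) by (apply sqrt_lt_1_alt; lra).
replace 4 with (2*2) in H0 by ring. rewrite sqrt_square in H0; lra.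
Qed.

Lemma valid_sq Q p1 p2 q1 q2 : valid_config Q -> In (p1,p2) Q -> In (q1,q2) Q ->
  (p1,p2) <> (q1,q2) -> 4 <= (q1-p1)^2 + (q2-p2)^2.
Proof.
intros V Hp Hq Hne.
destruct (In_nth Q (p1,p2) (0,0) Hp) as [i [Hi Ei]].
destruct (In_nth Q (q1,q2) (0,0) Hq) as [j [Hj Ej]].
assert (i <> j) by (intro; subst; congruence).
specialize (V i j Hi Hj H). rewrite Ei, Ej in V.
unfold Defs.dist, dot, psub in V; cbn [fst snd] in V.
apply Rge_le, sqrt_ge2 in V; [nra|]. pose proof (pow2_ge_0 (p1-q1)); pose proof (pow2_ge_0 (p2-q2)); nra.
Qed.

Lemma abs1 x : x^2 = 1 -> Rabs x = 1.
Proof. intros. unfold Rabs; destruct (Rcase_abs x); nra. Qed.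

Lemma delta_of Q p1 p2 q1 q2 u1 u2 : valid_config Q -> In (p1,p2) Q -> In (q1,q2) Q ->
  (p1,p2) <> (q1,q2) -> (q1-p1)^2 + (q2-p2)^2 <= 8 -> u1^2+u2^2 = 1 ->
  (u1*(q2-p2) - u2*(q1-p1))^2 = 4 -> DeltaDirs Q (u1,u2).
Proof.
intros V Hp Hq Hne H8 Hu Hk.
exists (p1,p2), (q1,q2). split.
- split; [exact Hp|split; [exact Hq|split; [exact Hne|]]].
  exists ((p1+q1)/2, (p2+q2)/2), (Defs.dist (p1,p2) ((p1+q1)/2, (p2+q2)/2)).
  split; [reflexivity|split].
  + unfold Defs.dist, dot, psub; cbn [fst snd]. f_equal. field.
  + intros [x1 x2] Hx Hlt.
    assert (Hxp : (x1,x2) <> (p1,p2)) by (intro E; rewrite E in Hlt; lra).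
    assert (Hxq : (x1,x2) <> (q1,q2)).
    { intro E; rewrite E in Hlt.
      replace (Defs.dist (q1, q2) ((p1 + q1) / 2, (p2 + q2) / 2)) with
        (Defs.dist (p1, p2) ((p1 + q1) / 2, (p2 + q2) / 2)) in Hlt by
        (unfold Defs.dist, dot, psub; cbn [fst snd]; f_equal; field). lra. }
    pose proof (valid_sq Q _ _ _ _ V Hp Hx (not_eq_sym Hxp)) as A1.
    pose proof (valid_sq Q _ _ _ _ V Hq Hx (not_eq_sym Hxq)) as A2.
    unfold Defs.dist, dot, psub in Hlt; cbn [fst snd] in Hlt.
    apply sqrt_lt_0_alt in Hlt.
    assert (E : (x1 - p1)^2 + (x2 - p2)^2 + ((x1 - q1)^2 + (x2 - q2)^2) =
      2*((x1 - (p1 + q1) / 2) * (x1 - (p1 + q1) / 2) + (x2 - (p2 + q2) / 2) * (x2 - (p2 + q2) / 2))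
      + ((q1-p1)^2+(q2-p2)^2)/2) by field.
    assert (E2 : (p1 - (p1 + q1) / 2) * (p1 - (p1 + q1) / 2) + (p2 - (p2 + q2) / 2) * (p2 - (p2 + q2) / 2)
      = ((q1-p1)^2+(q2-p2)^2)/4) by field.
    lra.
- split; [unfold unit_vec, dot; cbn [fst snd]; lra|].
  exists ((p1+q1)/2, (p2+q2)/2). unfold cross, psub; cbn [fst snd].
  set (K := u1*(q2-p2) - u2*(q1-p1)) in *.
  replace (u1 * (p2 - (p2 + q2) / 2) - u2 * (p1 - (p1 + q1) / 2)) with (-(K/2)) by (unfold K; field).
  replace (u1 * (q2 - (p2 + q2) / 2) - u2 * (q1 - (p1 + q1) / 2)) with (K/2) by (unfold K; field).
  assert ((K/2)^2 = 1) by (replace ((K/2)^2) with (K^2/4) by field; rewrite Hk; field).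
  split; [apply abs1; replace ((-(K/2))^2) with ((K/2)^2) by ring; auto|split; [apply abs1; auto|]].
  replace (- (K / 2) * (K / 2)) with (-((K/2)^2)) by ring. lra.
Qed.

Lemma enc_bound Q r p1 p2 d1 d2 : smallest_enclosing_disc Q (0,0) r -> In (p1,p2) Q ->
  d1^2+d2^2 = 1 ->
  0 <= r /\ -r <= d1*p1 + d2*p2 <= r /\ -r <= -d2*p1 + d1*p2 <= r.
Proof.
intros [H _] Hp Hd. specialize (H _ Hp).
unfold Defs.dist, dot, psub in H; cbn [fst snd] in H.
assert (Hr : 0 <= r) by (pose proof (sqrt_pos ((p1 - 0) * (p1 - 0) + (p2 - 0) * (p2 - 0))); lra).
set (z := (p1 - 0) * (p1 - 0) + (p2 - 0) * (p2 - 0)) in *.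
assert (Hz : 0 <= z) by (unfold z; pose proof (pow2_ge_0 p1); pose proof (pow2_ge_0 p2); nra).
assert (Hzr : z <= r^2).
{ rewrite <- (pow2_sqrt z Hz). pose proof (sqrt_pos z). nra. }
assert (E : (d1*p1+d2*p2)^2 + (-d2*p1+d1*p2)^2 = z*(d1^2+d2^2)) by (unfold z; ring).
rewrite Hd in E.
pose proof (pow2_ge_0 (d1*p1+d2*p2)); pose proof (pow2_ge_0 (-d2*p1+d1*p2)).
split; [auto|split; apply abs_sq; nra].
Qed.

Lemma wbound (N rS rT dx px dy py : R) : 2 <= N -> 0 <= rS -> 0 <= rT ->
  -rT <= dx <= rT -> -rT <= px <= rT -> -rS <= dy <= rS -> -rS <= py <= rS ->
  let V := (rS + rT + 2) * (1 + 8 * N) in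
  0 < V + dx - dy /\ (px - py)^2 <= (1/(8*N))^2 * (V + dx - dy)^2.
Proof.
intros HN HS HT Hdx Hpx Hdy Hpy V.
set (R := rS + rT).
assert (HV : V - R = 8*N*R + 2 + 16*N) by (unfold V, R; ring).
assert (HNR : 0 <= N*R) by (apply Rmult_le_pos; unfold R; lra).
split; [unfold R in *; lra|].
assert (H1 : R <= 1/(8*N) * (V - R)).
{ apply Rmult_le_reg_l with (8*N); [lra|]. field_simplify; [|lra]. nra. }
assert (H2 : 1/(8*N) * (V - R) <= 1/(8*N) * (V + dx - dy)).
{ apply Rmult_le_compat_l; [|unfold R; lra]. apply Rlt_le, Rdiv_lt_0_compat; lra. }
assert (H3 : (px - py)^2 <= R^2) by (unfold R; nra).
replace ((1/(8*N))^2 * (V + dx - dy)^2) with ((1/(8*N) * (V + dx - dy))^2) by ring.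
assert (0 <= R) by (unfold R; lra). nra.
Qed.

Theorem mainTheorem6 (n : nat) (S T : list point) (rS rT : R) (d : point)
  (s t : list point) :
  (2 <= n)%nat ->
  length S = n -> length T = n ->
  valid_config S -> valid_config T ->
  smallest_enclosing_disc S (0,0) rS ->
  smallest_enclosing_disc T (0,0) rT ->
  unit_vec d ->
  (forall u, DeltaDirs S u \/ DeltaDirs T u -> angle d u >= PI / (24 * INR n)) ->
  is_Pi d S s -> is_Pi d T t ->
  let v := pscale ((rS + rT + 2) * (1 + 8 * INR n)) d in
  valid_translation (combine s t) v /\ valid_itinerary (combine s t) v.
Proof.
intros Hn HS HT VS VT ES ET Hd Hang [PS OS] [PT OT] v.
assert (Ls : length s = n) by (rewrite <- (Permutation_length PS); auto).
assert (Lt : length t = n) by (rewrite <- (Permutation_length PT); auto).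
destruct d as [d1 d2].
assert (Hd1 : d1^2 + d2^2 = 1) by (unfold unit_vec, dot in Hd; cbn [fst snd] in Hd; lra).
destruct (consts n Hn) as [Hs0 [Hs2 [Hc Hg]]].
assert (HN : 2 <= INR n) by (apply (le_INR 2); auto).
set (V := (rS + rT + 2) * (1 + 8 * INR n)) in *.
assert (InS : forall k, (k < n)%nat -> In (nth k s (0,0)) S).
{ intros k Hk. apply (Permutation_in _ (Permutation_sym PS)). apply nth_In. lia. }
assert (InT : forall k, (k < n)%nat -> In (nth k t (0,0)) T).
{ intros k Hk. apply (Permutation_in _ (Permutation_sym PT)). apply nth_In. lia. }
assert (Hit : valid_itinerary (combine s t) v).
{ intros i Hi. rewrite length_combine, Ls, Lt, Nat.min_id in Hi.
  cbv zeta.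
  match goal with |- context [nth i (combine s t) ?x] => replace (nth i (combine s t) x) with (nth i s (0,0), nth i t (0,0)) by (symmetry; apply combine_nth; congruence) end. cbn [fst snd].
  pose proof (InS i Hi) as Si. pose proof (InT i Hi) as Ti.
  destruct (nth i s (0,0)) as [a1 a2] eqn:Ei.
  destruct (nth i t (0,0)) as [b1 b2] eqn:Fi.
  destruct (enc_bound S rS a1 a2 d1 d2 ES Si Hd1) as [HrS [Ba1 Ba2]].
  destruct (enc_bound T rT b1 b2 d1 d2 ET Ti Hd1) as [HrT [Bb1 Bb2]].
  destruct (wbound (INR n) rS rT (d1*b1+d2*b2) (-d2*b1+d1*b2) (d1*a1+d2*a2) (-d2*a1+d1*a2)
     HN HrS HrT Bb1 Bb2 Ba1 Ba2) as [W1 W2].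
  fold V in W1, W2.
  unfold v, padd, pscale; cbn [fst snd].
  split.
  - intros j Hij Hj. rewrite length_combine, Ls, Lt, Nat.min_id in Hj.
    match goal with |- context [nth j (combine s t) ?x] => replace (nth j (combine s t) x) with (nth j s (0,0), nth j t (0,0)) by (symmetry; apply combine_nth; congruence) end. cbn [fst snd].
    pose proof (InS j Hj) as Sj. pose proof (OS i j Hij ltac:(lia)) as Oij.
    rewrite Ei in Oij.
    destruct (nth j s (0,0)) as [c1 c2] eqn:Ej.
    assert (Hne : (a1,a2) <> (c1,c2)).
    { intro E. inversion E; subst. unfold pi_before in Oij. lra. }
    apply disj_seg. intros l Hl.
    destruct (Rlt_or_le ((c1 - a1 - l * (b1 + V * d1 - a1)) ^ 2 + (c2 - a2 - l * (b2 + V * d2 - a2)) ^ 2) 4)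
      as [Hcol|Hok]; [exfalso|exact Hok].
    assert (Hef : d1*(c1-a1) + d2*(c2-a2) <= 0).
    { unfold pi_before, xcoord, ycoord, dot, perp in Oij; cbn [fst snd] in Oij. lra. }
    assert (E1 : d1*(b1 + V*d1 - a1) + d2*(b2 + V*d2 - a2) = V*(d1^2+d2^2) + (d1*b1+d2*b2) - (d1*a1+d2*a2)) by ring.
    rewrite Hd1 in E1.
    assert (E2 : -d2*(b1 + V*d1 - a1) + d1*(b2 + V*d2 - a2) = (-d2*b1+d1*b2) - (-d2*a1+d1*a2)) by ring.
    assert (Hf4 : 4 <= (c1-a1)^2 + (c2-a2)^2) by (apply (valid_sq S); auto).
    assert (HW : 0 < d1*(b1 + V*d1 - a1) + d2*(b2 + V*d2 - a2)) by (rewrite E1; lra).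
    assert (HZ : (-d2*(b1 + V*d1 - a1) + d1*(b2 + V*d2 - a2))^2 <= (1/(8*INR n))^2*(d1*(b1 + V*d1 - a1) + d2*(b2 + V*d2 - a2))^2) by (rewrite E1, E2; lra).
    destruct (core d1 d2 (c1-a1) (c2-a2) (b1 + V*d1 - a1) (b2 + V*d2 - a2) l (1/(8*INR n)) (cos (PI / (24 * INR n))))
      as [H8 [u1 [u2 [Hu [Hk Hdu]]]]]; try assumption.
    assert (HD : DeltaDirs S (u1,u2)) by (apply (delta_of S a1 a2 c1 c2); auto).
    specialize (Hang (u1,u2) (or_introl HD)).
      pose proof (angle_lt d1 d2 u1 u2 _ Hd1 Hu Hg Hdu). lra.
  - intros j Hji.
    assert (Hj : (j < n)%nat) by lia.
    match goal with |- context [nth j (combine s t) ?x] => replace (nth j (combine s t) x) with (nth j s (0,0), nth j t (0,0)) by (symmetry; apply combine_nth; congruence) end. cbn [fst snd].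
    pose proof (InT j Hj) as Tj. pose proof (OT j i Hji ltac:(lia)) as Oji.
    rewrite Fi in Oji.
    destruct (nth j t (0,0)) as [c1 c2] eqn:Ej.
    assert (Hne : (b1,b2) <> (c1,c2)).
    { intro E. inversion E; subst. unfold pi_before in Oji. lra. }
    unfold padd, pscale; cbn [fst snd].
    apply disj_seg. intros l Hl.
    destruct (Rlt_or_le ((c1 + V * d1 - a1 - l * (b1 + V * d1 - a1)) ^ 2 + (c2 + V * d2 - a2 - l * (b2 + V * d2 - a2)) ^ 2) 4)
      as [Hcol|Hok]; [exfalso|exact Hok].
    assert (Hef : (-d1)*(c1-b1) + (-d2)*(c2-b2) <= 0).
    { unfold pi_before, xcoord, ycoord, dot, perp in Oji; cbn [fst snd] in Oji. lra. }
    assert (E1 : (-d1)*(a1 - b1 - V*d1) + (-d2)*(a2 - b2 - V*d2) = V*(d1^2+d2^2) + (d1*b1+d2*b2) - (d1*a1+d2*a2)) by ring.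
    rewrite Hd1 in E1.
    assert (E2 : - (-d2)*(a1 - b1 - V*d1) + (-d1)*(a2 - b2 - V*d2) = (-d2*b1+d1*b2) - (-d2*a1+d1*a2)) by ring.
    assert (He1 : (-d1)^2 + (-d2)^2 = 1) by (replace ((-d1)^2 + (-d2)^2) with (d1^2+d2^2) by ring; exact Hd1).
    assert (Hf4 : 4 <= (c1-b1)^2 + (c2-b2)^2) by (apply (valid_sq T); auto).
    assert (HW : 0 < (-d1)*(a1 - b1 - V*d1) + (-d2)*(a2 - b2 - V*d2)) by (rewrite E1; lra).
    assert (HZ : (- (-d2)*(a1 - b1 - V*d1) + (-d1)*(a2 - b2 - V*d2))^2 <= (1/(8*INR n))^2*((-d1)*(a1 - b1 - V*d1) + (-d2)*(a2 - b2 - V*d2))^2) by (rewrite E1, E2; lra).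
    assert (Hl' : 0 <= 1 - l <= 1) by lra.
    assert (Hcol' : (c1 - b1 - (1 - l) * (a1 - b1 - V * d1)) ^ 2 + (c2 - b2 - (1 - l) * (a2 - b2 - V * d2)) ^ 2 < 4).
    { replace ((c1 - b1 - (1 - l) * (a1 - b1 - V * d1)) ^ 2 + (c2 - b2 - (1 - l) * (a2 - b2 - V * d2)) ^ 2)
        with ((c1 + V * d1 - a1 - l * (b1 + V * d1 - a1)) ^ 2 + (c2 + V * d2 - a2 - l * (b2 + V * d2 - a2)) ^ 2) by ring.
      exact Hcol. }
    destruct (core (-d1) (-d2) (c1-b1) (c2-b2) (a1 - b1 - V*d1) (a2 - b2 - V*d2) (1-l) (1/(8*INR n)) (cos (PI / (24 * INR n))))
      as [H8 [u1 [u2 [Hu [Hk Hdu]]]]]; try assumption.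
    assert (HD : DeltaDirs T (-u1,-u2)).
    { apply (delta_of T b1 b2 c1 c2); auto.
      - replace ((-u1)^2 + (-u2)^2) with (u1^2+u2^2) by ring. exact Hu.
      - rewrite <- Hk. ring. }
    specialize (Hang (-u1,-u2) (or_intror HD)).
    assert (Hu' : (-u1)^2 + (-u2)^2 = 1) by (replace ((-u1)^2 + (-u2)^2) with (u1^2+u2^2) by ring; exact Hu).
    assert (Hdu' : cos (PI / (24 * INR n)) < d1*(-u1) + d2*(-u2)) by lra.
    pose proof (angle_lt d1 d2 (-u1) (-u2) _ Hd1 Hu' Hg Hdu'). lra. }
split; [|exact Hit].
exists (combine s t). split; [apply Permutation_refl|exact Hit].
Qed.
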